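(* Let $A$ and $B$ be C$^*$-algebras, where $A$ is unital with unit $1$. Suppose $T:A\to B$ is a linear map such that for all $a,b\in A$, $ab^*=1$ implies $T(a)T(b)^*=T(1)$. Then $T$ is continuous and $T(1)T(a)=T(a)$ for every $a\in A$. Furthermore, if $T$ is a $^*$-homomorphism at the unit of $A$, then $T$ is continuous and $T(a)T(1)=T(1)T(a)=T(a)$ for every $a\in A$.
   Context: A map $T:A\to B$ between C$^*$-algebras is a $^*$-homomorphism at $z\in A$ if for all $a,b\in A$ with $ab^*=z$ one has $T(ab^* )=T(a)T(b)^*=T(z)$, and for all $c,d\in A$ with $c^*d=z$ one has $T(c^*d)=T(c)^*T(d)=T(z)$. *)

(* Defs.v *)
From HB Require Import structures.
From mathcomp Require Import all_boot all_order all_algebra.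
From mathcomp Require Import all_classical all_reals all_analysis.
From mathcomp Require Import complex.
Set Implicit Arguments. Unset Strict Implicit. Unset Printing Implicit Defensive.
Import Order.TTheory GRing.Theory Num.Theory.
Import numFieldNormedType.Exports.
Local Open Scope ring_scope.
Local Open Scope complex_scope.

(* No unit is assumed. *)
Definition is_cstar_algebra (R : realType) (V : completeNormedModType R[i])
    (mul : V -> V -> V) (star : V -> V) : Prop :=
  [/\ (forall x y z, mul x (mul y z) = mul (mul x y) z),
      (forall x y z, mul (x + y) z = mul x z + mul y z),
      (forall x y z, mul x (y + z) = mul x y + mul x z),
      (forall (c : R[i]) x y, mul (c *: x) y = c *: mul x y) &
      (forall (c : R[i]) x y, mul x (c *: y) = c *: mul x y)] /\
  (forall x y, `|mul x y| <= `|x| * `|y|) /\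
      [/\ (forall x y, star (x + y) = star x + star y),
          (forall (c : R[i]) x, star (c *: x) = (c^*)%C *: star x),
          (forall x, star (star x) = x),
          (forall x y, star (mul x y) = mul (star y) (star x)) &
          (forall x, `|mul (star x) x| = `|x| ^+ 2)].

Definition star_hom_at (A B : Type) (mulA : A -> A -> A) (starA : A -> A)
    (mulB : B -> B -> B) (starB : B -> B) (T : A -> B) (z : A) : Prop :=
  (forall a b, mulA a (starA b) = z ->
     T (mulA a (starA b)) = mulB (T a) (starB (T b)) /\
     mulB (T a) (starB (T b)) = T z) /\
  (forall c d, mulA (starA c) d = z ->
     T (mulA (starA c) d) = mulB (starB (T c)) (T d) /\
     mulB (starB (T c)) (T d) = T z).

(* Main.v *)
Require Import Defs.
From HB Require Import structures.
From mathcomp Require Import all_boot all_order all_algebra.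
From mathcomp Require Import all_classical all_reals all_analysis.
From mathcomp Require Import complex.
From mathcomp Require Import ring lra.
Import Order.TTheory GRing.Theory Num.Theory.
Import numFieldNormedType.Exports.
Local Open Scope ring_scope.

Section Helpers.
Set Implicit Arguments. Unset Strict Implicit. Unset Printing Implicit Defensive.
Local Open Scope complex_scope.
Local Open Scope classical_set_scope.

Section NR.
Variables (R : realType) (V : normedModType R[i]).
Definition nr (x : V) : R := complex.Re `|x|.
Lemma nrE x : `|x| = (nr x)%:C.
Proof. by rewrite /nr RRe_real. Qed.
Lemma nr_ge0 x : 0 <= nr x.
Proof. by rewrite -ler0c -nrE. Qed.
Lemma nrD x y : nr (x + y) <= nr x + nr y.
Proof. by rewrite -lecR rmorphD /= -!nrE ler_normD. Qed.
Lemma nrN x : nr (- x) = nr x.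
Proof. by rewrite /nr normrN. Qed.
Lemma nrB x y : nr (x - y) <= nr x + nr y.
Proof. by rewrite -(nrN y) nrD. Qed.
Lemma nrZ (c : R[i]) x : nr (c *: x) = complex.Re `|c| * nr x.
Proof. by apply: complexI; rewrite rmorphM /= -nrE RRe_real // normrZ nrE. Qed.
Lemma nr_eq0 x : (nr x = 0) <-> x = 0.
Proof. split=> [h|->]; last by rewrite /nr normr0.
  by apply/eqP; rewrite -normr_eq0 nrE h. Qed.
Lemma nr0 : nr 0 = 0. Proof. by apply/nr_eq0. Qed.
End NR.


Section CStar.
Variables (R : realType) (V : completeNormedModType R[i]) (mul : V -> V -> V) (star : V -> V).
Hypothesis hV : is_cstar_algebra mul star.

Lemma cmulA x y z : mul x (mul y z) = mul (mul x y) z. Proof. by case: hV => [[]]. Qed.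
Lemma cmulDl x y z : mul (x + y) z = mul x z + mul y z. Proof. by case: hV => [[]]. Qed.
Lemma cmulDr x y z : mul x (y + z) = mul x y + mul x z. Proof. by case: hV => [[]]. Qed.
Lemma cmulZl c x y : mul (c *: x) y = c *: mul x y. Proof. by case: hV => [[]]. Qed.
Lemma cmulZr c x y : mul x (c *: y) = c *: mul x y. Proof. by case: hV => [[]]. Qed.
Lemma cnorm_mul x y : `|mul x y| <= `|x| * `|y|. Proof. by case: hV => _ []. Qed.
Lemma cstarD x y : star (x + y) = star x + star y. Proof. by case: hV => _ [_ []]. Qed.
Lemma cstarZ c x : star (c *: x) = (c^*)%C *: star x. Proof. by case: hV => _ [_ []]. Qed.
Lemma cstarK x : star (star x) = x. Proof. by case: hV => _ [_ []]. Qed.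
Lemma cstarM x y : star (mul x y) = mul (star y) (star x). Proof. by case: hV => _ [_ []]. Qed.
Lemma ccstar x : `|mul (star x) x| = `|x| ^+ 2. Proof. by case: hV => _ [_ []]. Qed.

Lemma cmul0l y : mul 0 y = 0.
Proof. by rewrite -[in LHS](scale0r (0:V)) cmulZl scale0r. Qed.
Lemma cmul0r y : mul y 0 = 0.
Proof. by rewrite -[in LHS](scale0r (0:V)) cmulZr scale0r. Qed.
Lemma cmulNl x y : mul (- x) y = - mul x y.
Proof. by rewrite -scaleN1r cmulZl scaleN1r. Qed.
Lemma cmulNr x y : mul x (- y) = - mul x y.
Proof. by rewrite -scaleN1r cmulZr scaleN1r. Qed.
Lemma cmulBl x y z : mul (x - y) z = mul x z - mul y z.
Proof. by rewrite cmulDl cmulNl. Qed.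
Lemma cmulBr x y z : mul x (y - z) = mul x y - mul x z.
Proof. by rewrite cmulDr cmulNr. Qed.
Lemma cstar0 : star 0 = 0.
Proof. by rewrite -[in LHS](scale0r (0:V)) cstarZ conjc0 scale0r. Qed.
Lemma cstarN x : star (- x) = - star x.
Proof. by rewrite -scaleN1r cstarZ rmorphN1 scaleN1r. Qed.
Lemma cstarB x y : star (x - y) = star x - star y.
Proof. by rewrite cstarD cstarN. Qed.

Lemma cnr_mul x y : nr (mul x y) <= nr x * nr y.
Proof. by rewrite -lecR rmorphM /= -!nrE cnorm_mul. Qed.
Lemma cnr_cstar x : nr (mul (star x) x) = nr x ^+ 2.
Proof. by apply: complexI; rewrite rmorphXn /= -!nrE ccstar. Qed.

Lemma cnr_le_star x : nr x <= nr (star x).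
Proof.
have h := cnr_mul (star x) x; rewrite cnr_cstar in h.
have h0 := nr_ge0 x; have h1 := nr_ge0 (star x).
have [->|xn0] := eqVneq (nr x) 0; first by [].
have xp : 0 < nr x by rewrite lt_def xn0 h0.
by rewrite -(ler_pM2r xp) -expr2.
Qed.
Lemma cnr_star x : nr (star x) = nr x.
Proof. by apply/eqP; rewrite eq_le cnr_le_star -{2}(cstarK x) cnr_le_star. Qed.

Lemma ccstar_eq0 x : mul x (star x) = 0 -> x = 0.
Proof.
move=> h; have := cnr_cstar (star x); rewrite cstarK h nr0 => /esym/eqP.
rewrite sqrf_eq0 => /eqP/nr_eq0 h2.
by rewrite -(cstarK x) h2 cstar0.
Qed.
Lemma ccstar_eq0' x : mul (star x) x = 0 -> x = 0.
Proof.
by move=> h; have := cnr_cstar x; rewrite h nr0 => /esym/eqP; rewrite sqrf_eq0 => /eqP/nr_eq0.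
Qed.

End CStar.


Section Geo.
Variables (R : realType).

Lemma geo_small (q d : R) : 0 <= q < 1 -> 0 < d -> exists N, q ^+ N < d.
Proof.
move=> /andP[q0 q1] d0.
have : (GRing.exp q : R^nat) @ \oo --> 0 by apply: cvg_expr; rewrite ger0_norm.
move=> /cvgrPdist_lt /(_ d d0) [N _ HN].
exists N; have := HN N (leqnn N); rewrite /= sub0r normrN ger0_norm //.
exact: exprn_ge0.
Qed.

Lemma geo_zero (q K d : R) : 0 <= q < 1 -> 0 <= d -> (forall n, d <= K * q ^+ n) -> d = 0.
Proof.
move=> hq d0 hd; apply/eqP; rewrite eq_le d0 andbT; rewrite leNgt; apply/negP => dp.
have K0 : 0 < K.
  have := hd 0%N; rewrite expr0 mulr1 => h; exact: lt_le_trans h.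
have [N HN] := geo_small hq (divr_gt0 dp K0).
have := hd N; rewrite -ler_pdivrMl // => h.
by rewrite mulrC in h; have := lt_le_trans HN h; rewrite ltxx.
Qed.

Variable (V : completeNormedModType R[i]).

Lemma geo_cvg (x : nat -> V) (C q : R) : 0 < C -> 0 <= q < 1 ->
  (forall n, nr (x n.+1 - x n) <= C * q ^+ n) ->
  exists l, forall n, nr (l - x n) <= C * q ^+ n / (1 - q).
Proof.
move=> C0 hq hx; have /andP[q0 q1] := hq.
have q1' : 0 < 1 - q by rewrite subr_gt0.
have step k n : nr (x (n + k)%N - x n) <= C * q ^+ n * (1 - q ^+ k) / (1 - q).
  elim: k => [|k IH]; first by rewrite addn0 subrr nr0 expr0 subrr mulr0 mul0r.
  have -> : x (n + k.+1)%N - x n = (x (n + k).+1 - x (n + k)%N) + (x (n + k)%N - x n).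
    by rewrite addnS addrA subrK.
  apply: le_trans (nrD _ _) _.
  apply: le_trans (lerD (hx _) IH) _.
  rewrite le_eqVlt; apply/orP; left; apply/eqP.
  rewrite exprD exprS; field; by rewrite lt0r_neq0.
have bnd n m : (n <= m)%N -> nr (x m - x n) <= C * q ^+ n / (1 - q).
  move=> /subnKC <-; apply: le_trans (step _ _) _.
  rewrite ler_pM2r ?invr_gt0 // -[leRHS]mulr1 ler_wpM2l ?mulr_ge0 ?exprn_ge0 ?(ltW C0) //.
  by rewrite gerBl exprn_ge0.
have : cvgn x.
  apply/cauchy_cvgP/cauchy_exP => e e0.
  have ep : 0 < complex.Re e by move: e0; rewrite ltcE /= => /andP[].
  have eE : e = (complex.Re e)%:C.
    by case: e e0 {ep} => a b; rewrite ltcE /= => /andP[/eqP -> _].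
  have [N HN] := geo_small hq (divr_gt0 (mulr_gt0 ep q1') C0).
  exists (x N); exists N => // m /= Nm.
  rewrite -ball_normE /= eE -normrN opprB nrE ltcR.
  apply: le_lt_trans (bnd _ _ Nm) _.
  have kpos : 0 < C / (1 - q) by rewrite divr_gt0.
  have := HN; rewrite -(ltr_pM2r kpos) => H.
  have -> : C * q ^+ N / (1 - q) = q ^+ N * (C / (1 - q)) by rewrite mulrCA mulrA.
  apply: lt_le_trans H _; rewrite le_eqVlt; apply/orP; left; apply/eqP.
  field.
  by rewrite !lt0r_neq0.
move=> xcvg; exists (limn x) => n.
apply/ler_addgt0Pr => e e0.
have /cvgrPdist_lt /(_ e%:C) : x @ \oo --> limn x by [].
rewrite ltcR => /(_ e0) [M _ HM].
have hm := HM (maxn M n) (leq_maxl _ _).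
rewrite nrE ltcR in hm.
have := nrD (limn x - x (maxn M n)) (x (maxn M n) - x n).
rewrite addrA subrK => h; apply: le_trans h _.
rewrite addrC; apply: lerD; [exact: bnd (leq_maxr _ _) | exact: ltW].
Qed.
End Geo.


Section Unit.
Variables (R : realType) (V : completeNormedModType R[i]) (mul : V -> V -> V) (star : V -> V).
Hypothesis hV : is_cstar_algebra mul star.
Variable one : V.
Hypothesis hone : forall a, mul one a = a /\ mul a one = a.

Lemma Re_normC (c : R) : complex.Re `|c%:C| = `|c|.
Proof. by rewrite normc_def /= expr0n addr0 sqrtr_sqr. Qed.

Definition half : R[i] := (2^-1 : R)%:C.
Lemma nr_half (x : V) : nr (half *: x) = 2^-1 * nr x.
Proof. by rewrite nrZ Re_normC ger0_norm. Qed.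
Lemma conj_half : (half^*)%C = half.
Proof. exact: conjc_real. Qed.
Lemma half_half : half + half = 1.
Proof. by rewrite /half -rmorphD /= [X in X%:C](_ : _ = 1) //; field. Qed.
Lemma half_twice (x : V) : half *: x + half *: x = x.
Proof. by rewrite -scalerDl half_half scale1r. Qed.

Lemma star_one : star one = one.
Proof.
have h := (hone (star one)).2.
have := congr1 star h; rewrite (cstarM hV) !(cstarK hV) => h2.
by rewrite -{1}h h2.
Qed.

Lemma mulsq_diff a b : mul a a - mul b b = mul a (a - b) + mul (a - b) b.
Proof.
by rewrite (cmulBr hV) (cmulBl hV) addrA subrK.
Qed.


Lemma nr_sym (a b : V) : nr (a - b) = nr (b - a).
Proof. by rewrite -opprB nrN. Qed.

Lemma sqrt_exists h : star h = h -> nr h <= 2^-1 ->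
  exists l, [/\ star l = l, mul h l = mul l h & l = half *: (mul h h + mul l l)].
Proof.
move=> sh nh.
set y := mul h h.
have nh0 := nr_ge0 h.
have ny : nr y <= 4^-1.
  apply: le_trans (cnr_mul hV h h) _; nra.
have sy : star y = y by rewrite /y (cstarM hV) sh.
pose f r := half *: (y + mul r r).
pose rs n := iter n f 0.
have rsS n : rs n.+1 = f (rs n) by [].
have inv n : [/\ nr (rs n) <= 4^-1, star (rs n) = rs n & mul h (rs n) = mul (rs n) h].
  elim: n => [|n [IH1 IH2 IH3]].
    by rewrite /= nr0 (cstar0 hV) (cmul0r hV) (cmul0l hV); split => //; lra.
  rewrite rsS; set r := rs n; split.
  - rewrite nr_half; apply: le_trans (ler_wpM2l _ (nrD _ _)) _; first lra.
    have := cnr_mul hV r r; have := nr_ge0 r; have := nr_ge0 (mul r r); nra.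
  - by rewrite /f (cstarZ hV) conj_half (cstarD hV) sy (cstarM hV) IH2.
  - rewrite /f (cmulZr hV) (cmulZl hV) (cmulDr hV) (cmulDl hV); congr (_ *: (_ + _)).
      by rewrite /y (cmulA hV).
    by rewrite (cmulA hV) IH3 -(cmulA hV) IH3 (cmulA hV).
have fB a b : f a - f b = half *: (mul a a - mul b b).
  by rewrite /f -scalerBr opprD addrACA subrr add0r.
have dif n : nr (rs n.+1 - rs n) <= 8^-1 * 4^-1 ^+ n.
  elim: n => [|n IH].
    rewrite /= subr0 /f (cmul0l hV) addr0 nr_half expr0; lra.
  rewrite rsS (rsS n) fB nr_half mulsq_diff.
  have [a1 _ _] := inv n.+1; have [b1 _ _] := inv n.
  rewrite -/(rs n.+1) in IH *.
  set a := rs n.+1 in IH a1 *; set b := rs n in IH b1 *.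
  have m1 := cnr_mul hV a (a - b); have m2 := cnr_mul hV (a - b) b.
  have d1 := nrD (mul a (a - b)) (mul (a - b) b).
  have := nr_ge0 a; have := nr_ge0 b; have := nr_ge0 (a - b).
  have t0 : 0 <= 4^-1 ^+ n :> R by apply: exprn_ge0.
  rewrite exprS; set t := 4^-1 ^+ n in IH t0 *.
  move=> *; nra.
have [l hl] := geo_cvg (x := rs) (C := 8^-1) (q := 4^-1) ltac:(lra) ltac:(apply/andP; split; lra) dif.
have B n : nr (l - rs n) <= 6^-1 * 4^-1 ^+ n.
  apply: le_trans (hl n) _; rewrite le_eqVlt; apply/orP; left; apply/eqP.
  have h34 : (1 - 4^-1 : R) = 3 / 4 by lra.
  by rewrite h34; field.
have tge0 n : 0 <= 4^-1 ^+ n :> R by apply: exprn_ge0.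
have q01 : 0 <= (4^-1 : R) < 1 by apply/andP; split; lra.
have nl : nr l <= 4^-1.
  by have := B 0%N; rewrite /= subr0 expr0; lra.
exists l; split.
- apply/eqP; rewrite -subr_eq0; apply/eqP/nr_eq0.
  apply: (@geo_zero _ (4^-1) 1) => //; first exact: nr_ge0.
  move=> n; have [_ s2 _] := inv n.
  have -> : star l - l = star (l - rs n) + (rs n - l).
    by rewrite (cstarB hV) s2 addrA subrK.
  apply: le_trans (nrD _ _) _; rewrite (cnr_star hV) -nr_sym.
  have := B n; have := tge0 n; lra.
- apply/eqP; rewrite -subr_eq0; apply/eqP/nr_eq0.
  apply: (@geo_zero _ (4^-1) 1) => //; first exact: nr_ge0.
  move=> n; have [_ _ s3] := inv n.
  have -> : mul h l - mul l h = mul h (l - rs n) - mul (l - rs n) h.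
    by rewrite (cmulBr hV) (cmulBl hV) s3 opprB addrA subrK.
  apply: le_trans (nrB _ _) _.
  have m1 := cnr_mul hV h (l - rs n); have m2 := cnr_mul hV (l - rs n) h.
  have := B n; have := tge0 n; have := nr_ge0 (l - rs n); nra.
- apply/eqP; rewrite -subr_eq0; apply/eqP/nr_eq0.
  apply: (@geo_zero _ (4^-1) 1) => //; first exact: nr_ge0.
  move=> n; have [r1 _ _] := inv n.
  have -> : l - f l = (l - rs n.+1) + (f (rs n) - f l).
    by rewrite -rsS addrA subrK.
  apply: le_trans (nrD _ _) _.
  rewrite fB nr_half mulsq_diff.
  have d1 := nrD (mul (rs n) (rs n - l)) (mul (rs n - l) l).
  have m1 := cnr_mul hV (rs n) (rs n - l); have m2 := cnr_mul hV (rs n - l) l.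
  have := B n.+1; have := B n; rewrite (nr_sym l (rs n)).
  have := nr_ge0 (rs n); have := nr_ge0 l; have := nr_ge0 (rs n - l).
  have := tge0 n; rewrite exprS; set t := 4^-1 ^+ n.
  move=> *; nra.
Qed.

Lemma conj_i : ('i^*)%C = - 'i :> R[i].
Proof. by apply/eqP; rewrite eq_complex /= oppr0 !eqxx. Qed.
Lemma conj_Ni : ((- 'i)^*)%C = 'i :> R[i].
Proof. by apply/eqP; rewrite eq_complex /= oppr0 opprK !eqxx. Qed.
Lemma i_i : 'i * 'i = -1 :> R[i].
Proof. by rewrite -expr2 sqr_i. Qed.

Lemma expand1 a b : mul a b = mul b a ->
  mul (a + 'i *: b) (a - 'i *: b) = mul a a + mul b b.
Proof.
move=> hab; rewrite (cmulDl hV) !(cmulBr hV) !(cmulZl hV) !(cmulZr hV) scalerA hab.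
by rewrite addrA subrK i_i scaleN1r opprK.
Qed.
Lemma expand2 a b : mul a b = mul b a ->
  mul (a - 'i *: b) (a + 'i *: b) = mul a a + mul b b.
Proof.
move=> hab; rewrite (cmulBl hV) !(cmulDr hV) !(cmulZl hV) !(cmulZr hV) scalerA hab.
by rewrite opprD addrA addrK i_i scaleN1r opprK.
Qed.

Lemma unitary_of_sa h : star h = h -> nr h <= 2^-1 ->
  exists u, [/\ mul u (star u) = one, mul (star u) u = one & h = half *: (u + star u)].
Proof.
move=> sh nh; have [l [sl hl fl]] := sqrt_exists sh nh.
set s := one - l.
have ss : star s = s by rewrite /s (cstarB hV) star_one sl.
have hs : mul h s = mul s h.
  by rewrite /s (cmulBr hV) (cmulBl hV) (hone h).1 (hone h).2 hl.
have hll : mul l l = l + l - mul h h.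
  by rewrite {3 4}fl half_twice addrAC subrr add0r.
have sqs : mul s s = one - mul h h.
  rewrite /s (cmulBr hV) !(cmulBl hV) (hone _).1 (hone _).1 (hone _).2 hll.
  by rewrite opprB (addrAC (l + l)) addrK addrA subrK.
have su : star (h + 'i *: s) = h - 'i *: s.
  by rewrite (cstarD hV) (cstarZ hV) sh ss conj_i scaleNr.
exists (h + 'i *: s); rewrite su; split.
- by rewrite expand1 // sqs addrC subrK.
- by rewrite expand2 // sqs addrC subrK.
- by rewrite addrACA subrr addr0 scalerDr half_twice.
Qed.
Definition unitary u := mul u (star u) = one /\ mul (star u) u = one.

Lemma unitary_star u : unitary u -> unitary (star u).
Proof. by case=> h1 h2; split; rewrite (cstarK hV). Qed.

Lemma Re_norm_i : complex.Re `|'i : R[i]| = 1.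
Proof. by rewrite normc_def /= expr0n add0r expr1n sqrtr1. Qed.
Lemma Re_norm_Ni : complex.Re `|- 'i : R[i]| = 1.
Proof. by rewrite normrN Re_norm_i. Qed.

Lemma decomp a : nr a <= 2^-1 -> exists u1 u2, [/\ unitary u1, unitary u2 &
  a = half *: (u1 + star u1) + 'i *: (half *: (u2 + star u2))].
Proof.
move=> na.
set h1 := half *: (a + star a).
set h2 := half *: ((- 'i) *: (a - star a)).
have s1 : star h1 = h1 by rewrite /h1 (cstarZ hV) conj_half (cstarD hV) (cstarK hV) addrC.
have s2 : star h2 = h2.
  rewrite /h2 (cstarZ hV) conj_half (cstarZ hV) (cstarB hV) (cstarK hV).
  rewrite conj_Ni.
  by rewrite -opprB scalerN -scaleNr.
have nas := cnr_star hV a.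
have n1 : nr h1 <= 2^-1.
  rewrite /h1 nr_half; have := nrD a (star a); lra.
have n2 : nr h2 <= 2^-1.
  rewrite /h2 nr_half nrZ Re_norm_Ni mul1r; have := nrB a (star a); lra.
have [u1 [p1 q1 e1]] := unitary_of_sa s1 n1.
have [u2 [p2 q2 e2]] := unitary_of_sa s2 n2.
exists u1, u2; split => //; rewrite -e1 -e2 /h1 /h2.
rewrite scalerA scalerA mulrAC mulrN i_i opprK mul1r.
by rewrite -scalerDr addrACA subrr addr0 scalerDr half_twice.
Qed.

End Unit.


Section Bside.
Variables (R : realType) (V : completeNormedModType R[i]) (mul : V -> V -> V) (star : V -> V).
Hypothesis hV : is_cstar_algebra mul star.
Variable p : V.
Hypothesis sp : star p = p.
Hypothesis pp : mul p p = p.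


Lemma absorb_left v : mul v (star v) = p -> mul p v = v.
Proof.
move=> hv; apply/esym/eqP; rewrite -subr_eq0; apply/eqP/(ccstar_eq0 hV).
rewrite (cstarB hV) (cstarM hV) sp (cmulBl hV) !(cmulBr hV).
rewrite !(cmulA hV) hv -(cmulA hV) hv pp.
by rewrite pp subrr.
Qed.

Lemma absorb_right v : mul (star v) v = p -> mul v p = v.
Proof.
move=> hv; apply/esym/eqP; rewrite -subr_eq0; apply/eqP/(ccstar_eq0' hV).
rewrite (cstarB hV) (cstarM hV) sp (cmulBl hV) !(cmulBr hV).
rewrite !(cmulA hV) hv pp -(cmulA hV) hv pp.
by rewrite pp subrr.
Qed.


Lemma bound_left v : mul v (star v) = p -> nr v <= 1 + nr p.
Proof.
move=> hv; have := cnr_cstar hV (star v); rewrite (cstarK hV) hv (cnr_star hV) => e.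
have := nr_ge0 v; rewrite e; nra.
Qed.
Lemma bound_right v : mul (star v) v = p -> nr v <= 1 + nr p.
Proof.
move=> hv; have := cnr_cstar hV v; rewrite hv => e.
have := nr_ge0 v; rewrite e; nra.
Qed.
End Bside.

Section Main.
Variables (R : realType)
    (A : completeNormedModType R[i]) (mulA : A -> A -> A) (starA : A -> A)
    (B : completeNormedModType R[i]) (mulB : B -> B -> B) (starB : B -> B)
    (hA : is_cstar_algebra mulA starA) (hB : is_cstar_algebra mulB starB)
    (oneA : A) (hone : forall a, mulA oneA a = a /\ mulA a oneA = a)
    (T : {linear A -> B}).

Lemma TD x y : T (x + y) = T x + T y. Proof. exact: raddfD. Qed.
Lemma TZ c x : T (c *: x) = c *: T x. Proof. exact: linearZZ. Qed.

Lemma nr_i (x : B) : nr ('i *: x) = nr x.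
Proof. by rewrite nrZ Re_norm_i mul1r. Qed.

Lemma extend (g : B -> B) (gD : forall x y, g (x + y) = g x + g y)
  (gZ : forall c x, g (c *: x) = c *: g x) :
  (forall u, unitary mulA starA oneA u -> g (T u) = T u) -> forall a, g (T a) = T a.
Proof.
move=> hu.
have small a : nr a <= 2^-1 -> g (T a) = T a.
  move=> na; have [u1 [u2 [h1 h2 ->]]] := decomp hA hone na.
  rewrite !TD !TZ !TD !gD !gZ !gD.
  by rewrite !hu //; apply: (unitary_star hA).
move=> a; set k : R := 2 * nr a + 1.
have k0 : 0 < k by rewrite /k; have := nr_ge0 a; lra.
have -> : a = k%:C *: ((k^-1)%:C *: a).
  by rewrite scalerA -rmorphM /= mulfV ?lt0r_neq0 // scale1r.
rewrite TZ gZ small // nrZ Re_normC ger0_norm ?invr_ge0 ?ltW //.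
rewrite mulrC ltr_pdivrMr // /k; have := nr_ge0 a; lra.
Qed.

Lemma bounded (K : R) : (forall u, unitary mulA starA oneA u -> nr (T u) <= K) ->
  forall a, nr a <= 2^-1 -> nr (T a) <= 2 * K.
Proof.
move=> hu a na; have [u1 [u2 [h1 h2 ->]]] := decomp hA hone na.
rewrite !TD !TZ !TD.
have b1 := hu _ h1; have b2 := hu _ h2.
have b3 := hu _ (unitary_star hA h1); have b4 := hu _ (unitary_star hA h2).
apply: le_trans (nrD _ _) _; rewrite nr_i !nr_half.
have := nrD (T u1) (T (starA u1)); have := nrD (T u2) (T (starA u2)); lra.
Qed.

Lemma cont_of (K : R) : (forall u, unitary mulA starA oneA u -> nr (T u) <= K) ->
  continuous T.
Proof.
move=> hu; apply/bounded_linear_continuous/ex_bound.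
exists (2 * K)%:C; apply/nbhs_norm0P; exists (2^-1 : R)%:C.
  by rewrite /= ltcE /= eqxx /=; lra.
move=> y /=; rewrite !nrE ltcR lecR => hy.
by apply: (bounded hu); apply: ltW.
Qed.

End Main.


End Helpers.

Unset Implicit Arguments. Set Strict Implicit.

Theorem proposition2p4 (R : realType)
    (A : completeNormedModType R[i]) (mulA : A -> A -> A) (starA : A -> A)
    (B : completeNormedModType R[i]) (mulB : B -> B -> B) (starB : B -> B)
    (hA : is_cstar_algebra mulA starA) (hB : is_cstar_algebra mulB starB)
    (oneA : A) (hone : forall a, mulA oneA a = a /\ mulA a oneA = a)
    (T : {linear A -> B}) :
  ((forall a b, mulA a (starA b) = oneA ->
       mulB (T a) (starB (T b)) = T oneA) ->
     continuous T /\ (forall a, mulB (T oneA) (T a) = T a)) /\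
  (star_hom_at mulA starA mulB starB T oneA ->
     continuous T /\
     (forall a, mulB (T a) (T oneA) = T a /\ mulB (T oneA) (T a) = T a)).
Proof.
have sone := star_one hA hone.
have one1 : mulA oneA (starA oneA) = oneA by rewrite sone (hone _).1.
have part1 : (forall a b, mulA a (starA b) = oneA ->
       mulB (T a) (starB (T b)) = T oneA) ->
   [/\ continuous T, (forall a, mulB (T oneA) (T a) = T a),
       starB (T oneA) = T oneA & mulB (T oneA) (T oneA) = T oneA].
  move=> H1; have pp0 := H1 _ _ one1.
  have sp : starB (T oneA) = T oneA.
    by rewrite -{1}pp0 (cstarM hB) (cstarK hB).
  have ppp : mulB (T oneA) (T oneA) = T oneA by have := pp0; rewrite sp.
  split => //.
  - apply: (cont_of hA hone (T:=T) (K:=1 + nr (T oneA))) => u [u1 _].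
    exact: (bound_left hB (H1 _ _ u1)).
  - apply: (extend hA hone (T:=T) (g:=mulB (T oneA))).
    + by move=> x y; exact: (cmulDr hB).
    + by move=> k x; exact: (cmulZr hB).
    + move=> u [u1 _]; exact: (absorb_left hB sp ppp (H1 _ _ u1)).
split.
  by move=> H1; have [c l _ _] := part1 H1.
move=> [S1 S2].
have [c l sp ppp] := part1 (fun a b h => (S1 a b h).2).
split => // a; split => //.
apply: (extend hA hone (T:=T) (g:=fun x => mulB x (T oneA))).
- by move=> x y; exact: (cmulDl hB).
- by move=> k x; exact: (cmulZl hB).
- move=> u [_ u2]; exact: (absorb_right hB sp ppp (S2 _ _ u2).2).
Qed.
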